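(* Let $n\ge 1$, $d\ge 2$, $1\le k\le n$ be integers and $R=n-k\lfloor n/k\rfloor$. For every $k$-separable state $\rho$ on $(\mathbb{C}^d)^{\otimes n}$, $$\|\tau(\rho)\|\le\sqrt{\big(d^{\lceil n/k\rceil}-1\big)^{R}\big(d^{\lfloor n/k\rfloor}-1\big)^{k-R}}.$$
   Context: Consider $n$ qudits with Hilbert space $(\mathbb{C}^d)^{\otimes n}$. Let $\lambda_0=\mathbb{1}_d$ and let $\lambda_1,\dots,\lambda_{d^2-1}$ be Hermitian traceless $d\times d$ matrices normalized so that $\mathrm{Tr}[\lambda_i\lambda_j]=d\,\delta_{ij}$. The full-body correlation tensor norm of a state $\rho$ is $\|\tau(\rho)\|=\big(\sum_{i_1,\dots,i_n=1}^{d^2-1}(\mathrm{Tr}[\rho\,\lambda_{i_1}\otimes\cdots\otimes\lambda_{i_n}])^2\big)^{1/2}$. A pure state is $k$-separable if it is a tensor product of $k$ pure states on the blocks of some partition of $\{1,\dots,n\}$ into $k$ nonempty blocks; a state is $k$-separable if it is a convex combination of $k$-separable pure states (partitions may differ between terms). *)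

(* Defs.v *)
(* Complex scalars: an arbitrary numClosedFieldType C
   (e.g. algC, or complex R for a real closed / real field R). *)
From HB Require Import structures.
From mathcomp Require Import all_boot all_order all_algebra.
Set Implicit Arguments.
Unset Strict Implicit.
Unset Printing Implicit Defensive.
Import Order.TTheory GRing.Theory Num.Theory.
Local Open Scope ring_scope.

Section QuditDefs.
Variable C : numClosedFieldType.

(* Computational basis of (C^d)^{\otimes n}: configurations x : 'I_n -> 'I_d. *)
Definition config (n d : nat) := {ffun 'I_n -> 'I_d}.

(* Operators on (C^d)^{\otimes n}, given by their matrix entries
   in the computational basis. *)
Definition qop (n d : nat) := config n d -> config n d -> C.

Definition tensop (n d : nat) (A : 'I_n -> 'M[C]_d) : qop n d :=
  fun x y => \prod_(j < n) A j (x j) (y j).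

Definition trprod (n d : nat) (rho M : qop n d) : C :=
  \sum_(x : config n d) \sum_(y : config n d) rho x y * M y x.

(* Hermitian, traceless, Tr[l_i l_j] = d delta_ij (indices 1..d^2-1 are
   represented 0-based by 'I_(d^2-1)). *)
Definition gellmann_basis (d : nat) (lam : 'I_(d ^ 2 - 1) -> 'M[C]_d) : Prop :=
  [/\ forall i a b, lam i b a = (lam i a b)^*,
      forall i, \tr (lam i) = 0
    & forall i j, \tr (lam i *m lam j) = d%:R * (i == j)%:R].

Definition tau_norm (n d : nat) (lam : 'I_(d ^ 2 - 1) -> 'M[C]_d)
    (rho : qop n d) : C :=
  sqrtC (\sum_(idx : {ffun 'I_n -> 'I_(d ^ 2 - 1)})
           (trprod rho (tensop (fun j => lam (idx j)))) ^+ 2).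

(* psi is (up to the canonical identification) a tensor product of vectors
   on the k blocks of a partition P of {0..n-1}: psi x = prod_B phi_B (x|_B). *)
Definition k_product_vector (n d k : nat) (psi : config n d -> C) : Prop :=
  exists P : {set {set 'I_n}},
    [/\ partition P [set: 'I_n], #|P| = k &
      exists phi : {set 'I_n} -> config n d -> C,
        (forall B, B \in P -> forall x y : config n d,
            (forall i, i \in B -> x i = y i) -> phi B x = phi B y)
        /\ (forall x, psi x = \prod_(B in P) phi B x)].

Definition k_sep_pure (n d k : nat) (sigma : qop n d) : Prop :=
  exists psi : config n d -> C,
    [/\ \sum_(x : config n d) `|psi x| ^+ 2 = 1,
        k_product_vector k psi
      & forall x y, sigma x y = psi x * (psi y)^*].

Definition k_separable (n d k : nat) (rho : qop n d) : Prop :=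
  exists (m : nat) (p : 'I_m -> C) (sigma : 'I_m -> qop n d),
    [/\ forall i, 0 <= p i,
        \sum_(i < m) p i = 1,
        forall i, k_sep_pure k (sigma i)
      & forall x y, rho x y = \sum_(i < m) p i * sigma i x y].

End QuditDefs.

Definition ceil_div (n k : nat) : nat := (n + k.-1) %/ k.

(* Main.v *)
Require Import Defs.
From HB Require Import structures.
From mathcomp Require Import all_boot all_order all_algebra.
From mathcomp Require Import zify ring lra.
Set Implicit Arguments. Unset Strict Implicit. Unset Printing Implicit Defensive.
Import Order.TTheory GRing.Theory Num.Theory.

Lemma swap_ineq d a b : 2 <= d -> a <= b ->
  (d^a - 1)*(d^(b.+1) - 1) <= (d^(a.+1)-1)*(d^b - 1).
Proof.
move=> hd hab.
have hA : 1 <= d ^ a by rewrite expn_gt0; lia.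
have hAB : d ^ a <= d ^ b by rewrite leq_pexp2l //; lia.
rewrite !expnS.
move: hA hAB; set A := d ^ a; set B := d ^ b => hA hAB.
nia.
Qed.

Lemma leq_eqs a b c e : c <= e -> a = c -> b = e -> a <= b.
Proof. by move=> h -> ->. Qed.

Section Comb.
Variables d q : nat.
Hypothesis hd : 2 <= d.
Let f x := d ^ x - 1.
Let u := f q.
Let v := f q.+1.

Lemma up_case m : f (q + m) * u ^ m <= u * v ^ m.
Proof.
elim: m => [|m IH]; first by rewrite addn0 !expn0 !muln1.
have sw : f (q + m).+1 * u <= v * f (q + m).
  by rewrite mulnC /f /u /v; apply: swap_ineq => //; lia.
rewrite addnS expnS mulnA.
apply: (leq_trans (leq_mul sw (leqnn _))).
rewrite expnS -mulnA mulnCA [u * (v * _)]mulnCA [f _ * (v * _)]mulnCA leq_mul2l IH orbT //.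
Qed.

Lemma down_case m : m <= q -> f (q - m) * v ^ m <= u ^ m.+1.
Proof.
elim: m => [|m IH] hm; first by rewrite subn0 expn0 muln1 expn1.
have sw : f (q - m.+1) * v <= f (q - m) * u.
  have -> : q - m = (q - m.+1).+1 by lia.
  by rewrite /f /u /v; apply: swap_ineq => //; lia.
rewrite expnS mulnA.
apply: (leq_trans (leq_mul sw (leqnn _))).
rewrite mulnAC [u ^ _.+1]expnS [u * _]mulnC leq_mul2r IH ?orbT //; lia.
Qed.

Lemma pointwise b : f b * u ^ b * v ^ q <= u ^ q.+1 * v ^ b.
Proof.
case: (leqP q b) => hb.
  have := up_case (b - q); rewrite subnKC // => h.
  have e1 : u ^ b = u ^ (b - q) * u ^ q by rewrite -expnD subnK.
  have e2 : v ^ b = v ^ (b - q) * v ^ q by rewrite -expnD subnK.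
  rewrite e1 e2 expnS.
  eapply leq_eqs; first exact: (leq_mul h (leqnn (u ^ q * v ^ q))).
  clearbody f u v. ring. clearbody f u v. ring.
have := down_case (m := q - b) (leq_subr _ _).
have -> : q - (q - b) = b by lia.
move=> h.
have e1 : v ^ q = v ^ (q - b) * v ^ b by rewrite -expnD subnK //; lia.
have e2 : u ^ q.+1 = u ^ (q - b).+1 * u ^ b.
  by rewrite -expnD; congr (_ ^ _); lia.
rewrite e1 e2.
eapply leq_eqs; first exact: (leq_mul h (leqnn (u ^ b * v ^ b))).
  all: clearbody f u v; ring.
Qed.

Lemma prod_bound (I : Type) (r : seq I) (P : pred I) (b : I -> nat) :
  (\prod_(i <- r | P i) f (b i)) * u ^ (\sum_(i <- r | P i) b i) * v ^ (q * (count P r))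
  <= u ^ (q.+1 * count P r) * v ^ (\sum_(i <- r | P i) b i).
Proof.
elim: r => [|i r IH]; first by rewrite !big_nil /= !muln0.
rewrite !big_cons /=; case: (P i) => /=; last by [].
have E1 : q.+1 * (count P r).+1 = q.+1 + q.+1 * count P r by rewrite mulnS.
have E2 : q * (count P r).+1 = q + q * count P r by rewrite mulnS.
rewrite add1n E1 E2 [u ^ (q.+1 + _)]expnD [v ^ (q + _)]expnD [u ^ (b i + _)]expnD [v ^ (b i + _)]expnD.
eapply leq_eqs; first exact: (leq_mul (pointwise (b i)) IH).
  all: clearbody f u v; ring.
Qed.

End Comb.

Lemma comb_bound (n d k : nat) (P : {set {set 'I_n}}) :
  (1 < d)%N -> partition P [set: 'I_n] -> #|P| = k -> (1 <= k)%N -> (k <= n)%N ->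
  (\prod_(B in P) (d ^ #|B| - 1) <=
    (d ^ ceil_div n k - 1) ^ (n - k * (n %/ k)) * (d ^ (n %/ k) - 1) ^ (k - (n - k * (n %/ k))))%N.
Proof.
move=> hd hP hk k1 kn.
set R := (n - k * (n %/ k))%N.
set q := (n %/ k)%N.
have hq : (1 <= q)%N by rewrite /q divn_gt0 //; lia.
set u := (d ^ q - 1)%N; set v := (d ^ q.+1 - 1)%N.
have u0 : (0 < u)%N.
  have : (d ^ 1 < d ^ q.+1)%N by rewrite ltn_exp2l //; lia.
  rewrite /u; have : (d ^ 1 <= d ^ q)%N by rewrite leq_exp2l //. lia.
have v0 : (0 < v)%N.
  have : (d ^ 1 <= d ^ q.+1)%N by rewrite leq_exp2l //. rewrite /v; lia.
have H := @prod_bound d q hd _ (enum P) predT (fun B => #|B|).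
rewrite count_predT -cardE !big_enum /= in H.
rewrite -(card_partition hP) cardsT card_ord hk in H.
have eR : R = (n %% k)%N by rewrite /R {1}(divn_eq n k) mulnC addKn.
have hn : n = (q * k + R)%N by rewrite eR /q -divn_eq.
have hR : (R <= k)%N by rewrite eR ltnW // ltn_pmod.
have eceil : (d ^ ceil_div n k - 1) ^ R = v ^ R.
  case: (posnP R) => R0; first by rewrite R0 !expn0.
  rewrite /ceil_div /v; congr ((d ^ _ - 1) ^ _).
  have rk : (R.-1 < k)%N by move: hR R0; clear; lia.
  have -> : (n + k.-1 = q.+1 * k + R.-1)%N.
    rewrite {1}hn mulSn; move: (q * k)%N R0 k1 => t; clear; lia.
  by rewrite divnMDl ?divn_small ?addn0 //; lia.
rewrite eceil -/q -/u.
move: H; rewrite -/u -/v.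
have e1 : (u ^ n = u ^ (q * k) * u ^ R)%N by rewrite -expnD -hn.
have e2 : (v ^ n = v ^ (q * k) * v ^ R)%N by rewrite -expnD -hn.
have e3 : (u ^ (q.+1 * k) = u ^ (q * k) * u ^ R * u ^ (k - R))%N.
  rewrite -!expnD; congr (_ ^ _).
  rewrite mulSn; move: (q * k)%N hR => t; clear; lia.
rewrite e1 e2 e3 => H.
have pos : (0 < u ^ (q * k) * u ^ R * v ^ (q * k))%N by rewrite !muln_gt0 !expn_gt0 u0 v0.
rewrite -(leq_pmul2r pos).
eapply leq_eqs; first exact: H.
all: move: (\prod_(i in P) (d ^ #|i| - 1))%N (u ^ (q * k))%N (u ^ R)%N (v ^ (q * k))%N (v ^ R)%N (u ^ (k - R))%N.
all: move=> a b c e f g; ring.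
Qed.


Local Open Scope ring_scope.

Definition dep (n : nat) (D : finType) (R : Type) (A : {set 'I_n})
  (f : {ffun 'I_n -> D} -> R) :=
  forall x y : {ffun 'I_n -> D}, (forall i, i \in A -> x i = y i) -> f x = f y.

Definition mg (n : nat) (D : finType) (A : {set 'I_n}) (x y : {ffun 'I_n -> D}) :
  {ffun 'I_n -> D} := [ffun i => if i \in A then x i else y i].

Lemma merge_sum (R : comPzRingType) (n : nat) (D : finType) (A : {set 'I_n})
  (f g : {ffun 'I_n -> D} -> R) :
  dep A f -> dep (~: A) g ->
  (\sum_x f x) * (\sum_x g x) = (\sum_x f x * g x) * (#|D| ^ n)%:R.
Proof.
move=> hf hg.
rewrite [(\sum_x f x) * _]mulr_suml.
under eq_bigr do rewrite mulr_sumr.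
rewrite pair_bigA /=.
pose h (p : {ffun 'I_n -> D} * {ffun 'I_n -> D}) := (mg A p.1 p.2, mg A p.2 p.1).
have hK : involutive h.
  case=> x y; rewrite /h /mg /=; congr (_, _); apply/ffunP=> i; rewrite !ffunE;
  by case: (i \in A).
rewrite (reindex_inj (inv_inj hK)) /=.
have -> : \sum_(p : {ffun 'I_n -> D} * {ffun 'I_n -> D}) f (h p).1 * g (h p).2 =
          \sum_(p : {ffun 'I_n -> D} * {ffun 'I_n -> D}) f p.1 * g p.1.
  apply: eq_bigr => -[x y] _ /=; congr (_ * _).
    by apply: hf => i hi; rewrite /mg ffunE hi.
  by apply: hg => i; rewrite inE /mg ffunE => /negbTE ->.
rewrite -(pair_bigA _ (fun x y => f x * g x)) /=.
rewrite mulr_suml; apply: eq_bigr => x _.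
by rewrite sumr_const card_ffun card_ord mulr_natr.
Qed.

Lemma prod_merge (R : comPzRingType) (n : nat) (D : finType) (s : seq {set 'I_n})
  (g : {set 'I_n} -> {ffun 'I_n -> D} -> R) :
  uniq s ->
  (forall B1 B2, B1 \in s -> B2 \in s -> B1 != B2 -> [disjoint B1 & B2]) ->
  (forall B, B \in s -> dep B (g B)) ->
  (\prod_(B <- s) \sum_x g B x) * (#|D| ^ n)%:R =
  (\sum_x \prod_(B <- s) g B x) * (#|D| ^ n)%:R ^+ size s.
Proof.
elim: s => [|B s IH] /=.
  move=> _ _ _; rewrite big_nil mul1r expr0 mulr1.
  under eq_bigr do rewrite big_nil.
  by rewrite sumr_const card_ffun card_ord -mulr_natr mul1r.
move=> /andP[Bs us] hdis hdep.
rewrite big_cons -mulrA IH //; first last.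
- by move=> B' hB'; apply: hdep; rewrite inE hB' orbT.
- by move=> B1 B2 h1 h2; apply: hdis; rewrite inE ?h1 ?h2 orbT.
rewrite mulrA (@merge_sum _ _ _ B); first last.
- move=> x y hxy; apply: eq_big_seq => B' hB'.
  have dB : [disjoint B & B'].
    apply: hdis; first by rewrite inE eqxx.
      by rewrite inE hB' orbT.
    by apply/eqP => e; move: Bs; rewrite e hB'.
  apply: (hdep B'); first by rewrite inE hB' orbT.
  move=> i hi; apply: hxy; rewrite inE.
  by apply/negP => hiB; move: dB; rewrite disjoint_sym => /disjointFr /(_ hi); rewrite hiB.
- by apply: hdep; rewrite inE eqxx.
rewrite exprS mulrA; congr (_ * _ * _).
by apply: eq_bigr => x _; rewrite big_cons.
Qed.

Section Dot.
Variables (C : numClosedFieldType) (X : finType).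
Definition dot (F G : X -> C) := \sum_x (F x)^* * G x.

Lemma dotC F G : dot F G = (dot G F)^*.
Proof. rewrite /dot rmorph_sum; apply: eq_bigr => x _; by rewrite rmorphM /= conjCK mulrC. Qed.

Lemma dot_suml (I : finType) (a : I -> C) (F : I -> X -> C) H :
  dot (fun p => \sum_e a e * F e p) H = \sum_e (a e)^* * dot (F e) H.
Proof.
rewrite /dot.
under eq_bigr do rewrite rmorph_sum mulr_suml.
rewrite exchange_big; apply: eq_bigr => e _; rewrite mulr_sumr.
by apply: eq_bigr => p _; rewrite rmorphM mulrA.
Qed.

Lemma dot_sumr (I : finType) (b : I -> C) (G : I -> X -> C) H :
  dot H (fun p => \sum_e b e * G e p) = \sum_e b e * dot H (G e).
Proof.
rewrite /dot.
under eq_bigr do rewrite mulr_sumr.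
rewrite exchange_big; apply: eq_bigr => e _; rewrite mulr_sumr.
by apply: eq_bigr => p _; rewrite mulrCA.
Qed.

Lemma dot_ge0 F : 0 <= dot F F.
Proof. by apply: sumr_ge0 => x _; rewrite mulrC mul_conjC_ge0. Qed.

Lemma dot_expand (M u w : X -> C) (al be : C) :
  dot (fun x => M x - al * u x - be * w x) (fun x => M x - al * u x - be * w x) =
  dot M M + (- al^* * dot u M) + (- be^* * dot w M) + (- al * dot M u)
  + al^* * al * dot u u + be^* * al * dot w u + (- be * dot M w)
  + al^* * be * dot u w + be^* * be * dot w w.
Proof.
rewrite /dot !mulr_sumr -!big_split /=; apply: eq_bigr => x _.
rewrite !rmorphB !rmorphM /=; ring.
Qed.

Lemma bessel (M u w : X -> C) (K s c0 : C) :
  0 < K -> 0 < c0 -> s^* = s -> dot u M = s -> dot u u = K * s ->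
  dot u w = 0 -> dot w w = c0 ->
  s <= K * (dot M M - dot w M * (dot w M)^* / c0).
Proof.
move=> K0 c00 sr huM huu huw hww.
set a := dot w M.
have Kr : K^* = K by apply: conj_Creal; apply: gtr0_real.
have cr : c0^* = c0 by apply: conj_Creal; apply: gtr0_real.
have := dot_ge0 (fun x => M x - K^-1 * u x - (a / c0) * w x).
rewrite dot_expand.
have hMu : dot M u = s by rewrite dotC huM.
have hwu : dot w u = 0 by rewrite dotC huw rmorph0.
have hMw : dot M w = a^* by rewrite dotC.
rewrite huM huu huw hww hMu hwu hMw -/a.
rewrite !rmorphM /= !fmorphV /= Kr cr.
have Kn : K != 0 by rewrite gt_eqF.
have cn : c0 != 0 by rewrite gt_eqF.
have -> : dot M M + - K^-1 * s + - (a^* / c0) * a + - K^-1 * s + K^-1 * K^-1 * (K * s) +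
  a^* / c0 * K^-1 * 0 + - (a / c0) * a^* + K^-1 * (a / c0) * 0 + a^* / c0 * (a / c0) * c0
  = K^-1 * (K * (dot M M - a * a^* / c0) - s) by field; rewrite cn Kn.
by rewrite pmulr_rge0 ?invr_gt0 // subr_ge0.
Qed.
End Dot.

Section Block.
Variables (C : numClosedFieldType) (n d : nat).

Lemma prod_indic (D : eqType) (B : {set 'I_n}) (x y : 'I_n -> D) :
  \prod_(j in B) ((x j == y j)%:R : C) = ([forall j in B, x j == y j])%:R.
Proof.
case h: [forall j in B, x j == y j].
  by move/forall_inP: h => h; rewrite big1 // => j hj; rewrite h.
move/negbT: h; rewrite negb_forall_in => /exists_inP[j hj hne].
by rewrite (bigD1 j) //= (negbTE hne) mul0r.
Qed.

Lemma sum_indic (D : finType) (B : {set 'I_n}) (x : {ffun 'I_n -> D}) :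
  \sum_(y : {ffun 'I_n -> D}) \prod_(j in B) ((x j == y j)%:R : C) =
  \prod_(j < n) (if j \in B then 1 else #|D|%:R).
Proof.
under eq_bigr do rewrite big_mkcond.
rewrite -(bigA_distr_bigA (fun j a => if j \in B then ((x j == a)%:R : C) else 1)).
apply: eq_bigr => j _; case: (j \in B).
  rewrite (bigD1 (x j)) //= eqxx big1 ?addr0 // => i /negbTE.
  by rewrite eq_sym => ->.
by rewrite sumr_const.
Qed.

Definition X := ({ffun 'I_n -> 'I_d} * {ffun 'I_n -> 'I_d})%type.

Lemma sum2_prod (G : 'I_n -> 'I_d -> 'I_d -> C) :
  \sum_(p : X) \prod_j G j (p.1 j) (p.2 j) = \prod_j \sum_a \sum_b G j a b.
Proof.
rewrite -(pair_bigA _ (fun x y : {ffun 'I_n -> 'I_d} => \prod_j G j (x j) (y j))) /=.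
under eq_bigr => x _ do rewrite -(bigA_distr_bigA (fun j b => G j (x j) b)).
by rewrite -(bigA_distr_bigA (fun j a => \sum_b G j a b)).
Qed.

Lemma prod_if (B : {set 'I_n}) (al be : C) :
  \prod_(j < n) (if j \in B then al else be) = al ^+ #|B| * be ^+ #|~: B|.
Proof.
rewrite (bigID (mem B)) /=; congr (_ * _).
  rewrite (eq_bigr (fun _ => al)) ?prodr_const; last by move=> j ->.
  by [].
rewrite (eq_bigr (fun _ => be)); last by move=> j /negbTE ->.
rewrite prodr_const; congr (_ ^+ _); apply: eq_card => j; by rewrite !inE.
Qed.


Lemma sum_delta (a : 'I_d) (F : 'I_d -> C) : \sum_b ((a == b)%:R * F b) = F a.
Proof.
rewrite (bigD1 a) //= eqxx mul1r big1 ?addr0 // => b /negbTE.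
by rewrite eq_sym => ->; rewrite mul0r.
Qed.

Variable lam : 'I_(d ^ 2 - 1) -> 'M[C]_d.
Hypothesis herm : forall i a b, lam i b a = (lam i a b)^*.
Hypothesis trz : forall i, \tr (lam i) = 0.
Hypothesis orth : forall i j, \tr (lam i *m lam j) = d%:R * (i == j)%:R.
Variable B : {set 'I_n}.
Variable j0 : 'I_n.
Hypothesis j0B : j0 \in B.
Variable phi : {ffun 'I_n -> 'I_d} -> C.
Hypothesis phidep : dep B phi.

Definition Xi (e : {ffun 'I_n -> 'I_(d ^ 2 - 1)}) (p : X) : C :=
  \prod_(j in B) (lam (e j) (p.2 j) (p.1 j))^*.
Definition Xi0 (p : X) : C := \prod_(j in B) ((p.1 j == p.2 j)%:R : C).
Definition Mv (p : X) : C := phi p.1 * (phi p.2)^*.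
Definition tB (e : {ffun 'I_n -> 'I_(d ^ 2 - 1)}) : C :=
  \sum_x \sum_y phi x * (phi y)^* * \prod_(j in B) lam (e j) (y j) (x j).
Definition Nphi : C := \sum_x phi x * (phi x)^*.
Definition cc : C := \prod_(j < n) (if j \in B then d%:R else (d * d)%:R).

Lemma L1 e : dot (Xi e) Mv = tB e.
Proof.
rewrite /dot /tB -(pair_bigA _ (fun x y : {ffun 'I_n -> 'I_d} =>
   (Xi e (x, y))^* * Mv (x, y))) /=.
apply: eq_bigr => x _; apply: eq_bigr => y _.
rewrite /Xi /Mv /= rmorph_prod /=.
under eq_bigr do rewrite conjCK.
by rewrite mulrC.
Qed.

Lemma L2 e e' : dot (Xi e) (Xi e') = cc * \prod_(j in B) ((e j == e' j)%:R : C).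
Proof.
rewrite /dot /Xi.
rewrite (eq_bigr (fun p : X => \prod_j (if j \in B then
   (lam (e j) (p.2 j) (p.1 j))^*^* * (lam (e' j) (p.2 j) (p.1 j))^* else 1))); last first.
  by move=> p _; rewrite rmorph_prod -big_split big_mkcond.
rewrite (sum2_prod (fun j a b => if j \in B then
   (lam (e j) b a)^*^* * (lam (e' j) b a)^* else 1)).
rewrite /cc (big_mkcond (mem B)) -big_split /=.
apply: eq_bigr => j _; case: ifP => jB; last first.
  by rewrite mulr1 !sumr_const card_ord natrM mulr_natr.
rewrite -orth /mxtrace exchange_big.
apply: eq_bigr => a _; rewrite mxE; apply: eq_bigr => b _.
by rewrite conjCK -(herm (e' j) a b).
Qed.


Lemma conj_Xi0 p : (Xi0 p)^* = Xi0 p.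
Proof. by rewrite /Xi0 rmorph_prod /=; apply: eq_bigr => j _; rewrite conjC_nat. Qed.

Lemma L3 e : dot Xi0 (Xi e) = 0.
Proof.
rewrite /dot.
rewrite (eq_bigr (fun p : X => \prod_j (if j \in B then
   ((p.1 j == p.2 j)%:R : C) * (lam (e j) (p.2 j) (p.1 j))^* else 1))); last first.
  by move=> p _; rewrite conj_Xi0 /Xi0 /Xi -big_split big_mkcond.
rewrite (sum2_prod (fun j a b => if j \in B then
   ((a == b)%:R : C) * (lam (e j) b a)^* else 1)).
rewrite (bigD1 j0) //= j0B.
under eq_bigr do rewrite sum_delta.
by rewrite -rmorph_sum /= -/(mxtrace _) trz rmorph0 mul0r.
Qed.

Lemma L4 : dot Xi0 Xi0 = cc.
Proof.
rewrite /dot.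
rewrite (eq_bigr (fun p : X => \prod_j (if j \in B then
   ((p.1 j == p.2 j)%:R : C) * ((p.1 j == p.2 j)%:R : C) else 1))); last first.
  by move=> p _; rewrite conj_Xi0 /Xi0 -big_split big_mkcond.
rewrite (sum2_prod (fun j a b => if j \in B then
   ((a == b)%:R : C) * ((a == b)%:R : C) else 1)).
rewrite /cc; apply: eq_bigr => j _; case: ifP => jB.
  under eq_bigr do rewrite sum_delta eqxx.
  by rewrite sumr_const card_ord -mulr_natl [true%:R]/(1 : C) mulr1.
by rewrite !sumr_const card_ord natrM mulr_natr.
Qed.

Lemma L5 : dot Mv Mv = Nphi ^+ 2.
Proof.
rewrite /dot /Mv -(pair_bigA _ (fun x y : {ffun 'I_n -> 'I_d} =>
   (phi x * (phi y)^*)^* * (phi x * (phi y)^*))) /=.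
rewrite expr2 /Nphi mulr_suml; apply: eq_bigr => x _.
rewrite mulr_sumr; apply: eq_bigr => y _.
rewrite rmorphM /= conjCK; ring.
Qed.

Definition mp : C := \prod_(j < n) (if j \in B then 1 else #|'I_d|%:R).
Definition mm : C := \prod_(j < n) (if j \in B then 1 else #|'I_(d ^ 2 - 1)|%:R).

Lemma L6 : dot Xi0 Mv = Nphi * mp.
Proof.
rewrite /dot /Mv -(pair_bigA _ (fun x y : {ffun 'I_n -> 'I_d} =>
   (Xi0 (x, y))^* * (phi x * (phi y)^*))) /=.
rewrite /Nphi mulr_suml; apply: eq_bigr => x _.
rewrite /mp -(sum_indic B x) mulr_sumr; apply: eq_bigr => y _.
rewrite conj_Xi0 /Xi0 /= prod_indic.
case h: [forall j in B, x j == y j]; last by rewrite !mul0r mulr0.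
have -> : phi y = phi x.
  by apply: phidep => i hi; move/forall_inP: h => /(_ i hi) /eqP.
by rewrite mul1r mulr1.
Qed.

Lemma L7 : dep B tB.
Proof.
move=> e e' h; rewrite /tB; apply: eq_bigr => x _; apply: eq_bigr => y _.
by congr (_ * _); apply: eq_bigr => j hj; rewrite h.
Qed.

Definition uu (p : X) : C := \sum_e tB e * Xi e p.
Definition ss : C := \sum_e (tB e)^* * tB e.

Lemma L8a : dot uu Mv = ss.
Proof. by rewrite /uu dot_suml; apply: eq_bigr => e _; rewrite L1. Qed.

Lemma L8b : dot uu uu = (cc * mm) * ss.
Proof.
rewrite {1}/uu dot_suml /ss mulr_sumr; apply: eq_bigr => e _.
rewrite /uu dot_sumr.
rewrite (eq_bigr (fun e' : {ffun 'I_n -> 'I_(d ^ 2 - 1)} => tB e * (cc * \prod_(j in B) ((e j == e' j)%:R : C)))); last first.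
  move=> e' _; rewrite L2 prod_indic.
  case h: [forall j in B, e j == e' j]; last by rewrite !mulr0.
  congr (_ * _); apply: esym; apply: L7 => i hi.
  by move/forall_inP: h => /(_ i hi) /eqP.
rewrite -mulr_sumr -mulr_sumr /mm -(sum_indic B e).
by set S := \sum_i _; ring.
Qed.

Lemma L9 : dot uu Xi0 = 0.
Proof.
rewrite /uu dot_suml big1 // => e _.
by rewrite dotC L3 rmorph0 mulr0.
Qed.

Hypothesis hd : (2 <= d)%N.

Lemma cc_gt0 : 0 < cc.
Proof.
rewrite /cc prodr_gt0 // => j _; case: ifP => _; rewrite ltr0n ?muln_gt0; lia.
Qed.

Lemma mm_gt0 : 0 < mm.
Proof.
rewrite /mm prodr_gt0 // => j _; case: ifP => _; rewrite ?ltr01 // ltr0n card_ord.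
have : (4 <= d ^ 2)%N by rewrite (@leq_exp2r 2 d 2).
lia.
Qed.

Lemma ss_real : ss^* = ss.
Proof.
rewrite /ss rmorph_sum; apply: eq_bigr => e _.
by rewrite rmorphM /= conjCK mulrC.
Qed.

Lemma block_bessel : ss <= (cc * mm) * (Nphi ^+ 2 - (Nphi * mp) * (Nphi * mp)^* / cc).
Proof.
rewrite -L5 -L6.
apply: bessel.
- by rewrite mulr_gt0 ?cc_gt0 ?mm_gt0.
- exact: cc_gt0.
- exact: ss_real.
- exact: L8a.
- exact: L8b.
- exact: L9.
- exact: L4.
Qed.


Lemma Nphi_real : Nphi^* = Nphi.
Proof.
rewrite /Nphi rmorph_sum; apply: eq_bigr => x _.
by rewrite rmorphM /= conjCK mulrC.
Qed.

Lemma mp_real : mp^* = mp.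
Proof.
rewrite /mp rmorph_prod; apply: eq_bigr => j _ /=.
by case: ifP => _; rewrite ?rmorph1 ?conjC_nat.
Qed.

Lemma block_final :
  ss * ((d * d)%:R * (d ^ 2 - 1)%:R) ^+ #|B| <=
  ((d * d)%:R * (d ^ 2 - 1)%:R) ^+ n * ((d%:R) ^+ #|B| - 1) * Nphi ^+ 2.
Proof.
have h := block_bessel.
have cn : cc != 0 by rewrite gt_eqF ?cc_gt0.
have e1 : cc * mm * (Nphi ^+ 2 - Nphi * mp * (Nphi * mp)^* / cc) =
          mm * Nphi ^+ 2 * (cc - mp ^+ 2).
  by rewrite rmorphM /= Nphi_real mp_real; field.
rewrite e1 in h.
have hQ : 0 <= ((d * d)%:R * (d ^ 2 - 1)%:R : C) ^+ #|B|.
  by apply: exprn_ge0; rewrite -natrM ler0n.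
apply: le_trans (ler_wpM2r hQ h) _.
rewrite le_eqVlt; apply/orP; left; apply/eqP.
have hn : ((d * d)%:R * (d ^ 2 - 1)%:R : C) ^+ n =
  ((d * d)%:R * (d ^ 2 - 1)%:R) ^+ #|B| * ((d * d)%:R * (d ^ 2 - 1)%:R) ^+ #|~: B|.
  by rewrite -exprD cardsC card_ord.
rewrite hn /mm /cc /mp !prod_if !card_ord !expr1n !mul1r.
rewrite !natrM !exprMn.
set x := (d%:R : C); set D2 := ((d ^ 2 - 1)%:R : C).
move: (x ^+ #|B|) (x ^+ #|~: B|) (D2 ^+ #|B|) (D2 ^+ #|~: B|) Nphi => a1 a2 a3 a4 a5; ring.
Qed.

End Block.

Lemma prod_merge_set (R : comPzRingType) (n : nat) (D : finType)
  (P : {set {set 'I_n}}) (g : {set 'I_n} -> {ffun 'I_n -> D} -> R) :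
  trivIset P -> (forall B, B \in P -> dep B (g B)) ->
  (\prod_(B in P) \sum_x g B x) * (#|D| ^ n)%:R =
  (\sum_x \prod_(B in P) g B x) * (#|D| ^ n)%:R ^+ #|P|.
Proof.
move=> /trivIsetP tP hd.
rewrite cardE -big_enum /=.
under [in RHS]eq_bigr do rewrite -big_enum /=.
apply: prod_merge; first exact: enum_uniq.
- by move=> B1 B2; rewrite !mem_enum; apply: tP.
- by move=> B; rewrite mem_enum; apply: hd.
Qed.

Lemma alg_final (C : numClosedFieldType) (s h ps pn pf a aK l lk qn qnk : C) :
  0 < a -> 0 < l -> 0 < lk -> 0 < qn -> 0 < aK ->
  s * (aK ^+ 2) ^+ 2 = a ^+ 4 * h -> ps * l = h * lk -> pn * a = aK ->
  ps * qn <= qnk * pf * pn ^+ 2 -> qn = a ^+ 2 * l -> qnk = aK ^+ 2 * lk -> s <= pf.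
Proof.
move=> a0 l0 lk0 qn0 aK0 E1 E2 E3 I hqn hqnk.
have W0 : 0 < (aK ^+ 2) ^+ 2 * lk * qn * a ^+ 2.
  by rewrite !mulr_gt0 // exprn_gt0 // exprn_gt0.
rewrite -(ler_pM2r W0).
have -> : s * ((aK ^+ 2) ^+ 2 * lk * qn * a ^+ 2) = (a ^+ 4 * l * a ^+ 2) * (ps * qn).
  have -> : s * ((aK ^+ 2) ^+ 2 * lk * qn * a ^+ 2) =
     (s * (aK ^+ 2) ^+ 2) * lk * qn * a ^+ 2 by ring.
  rewrite E1.
  have -> : a ^+ 4 * h * lk * qn * a ^+ 2 = a ^+ 4 * (h * lk) * qn * a ^+ 2 by ring.
  rewrite -E2; ring.
apply: le_trans (ler_wpM2l _ I) _.
  by rewrite !mulr_ge0 // ?exprn_ge0 // ltW.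
rewrite hqnk hqn -E3 le_eqVlt; apply/orP; left; apply/eqP; ring.
Qed.

Section Pure.
Variables (C : numClosedFieldType) (n d : nat) (lam : 'I_(d ^ 2 - 1) -> 'M[C]_d).
Hypothesis herm : forall i a b, lam i b a = (lam i a b)^*.
Hypothesis trz : forall i, \tr (lam i) = 0.
Hypothesis orth : forall i j, \tr (lam i *m lam j) = d%:R * (i == j)%:R.
Hypothesis hd : (1 < d)%N.
Variables (P : {set {set 'I_n}}) (phi : {set 'I_n} -> {ffun 'I_n -> 'I_d} -> C)
  (psi : {ffun 'I_n -> 'I_d} -> C).
Hypothesis hP : partition P [set: 'I_n].
Hypothesis hphi : forall B, B \in P -> dep B (phi B).
Hypothesis hpsi : forall x, psi x = \prod_(B in P) phi B x.
Hypothesis hnorm : \sum_x `|psi x| ^+ 2 = 1.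

Definition sigp : qop C n d := fun x y => psi x * (psi y)^*.
Definition Tp (e : {ffun 'I_n -> 'I_(d ^ 2 - 1)}) : C :=
  trprod sigp (tensop (fun j => lam (e j))).

Lemma Tp_real e : (Tp e)^* = Tp e.
Proof.
rewrite /Tp /trprod /tensop /sigp rmorph_sum exchange_big /=.
apply: eq_bigr => y _; rewrite rmorph_sum; apply: eq_bigr => x _ /=.
rewrite !rmorphM /= conjCK rmorph_prod /=.
under eq_bigr do rewrite -herm.
by rewrite [(psi y)^* * _]mulrC.
Qed.

Definition f1 (z : {ffun 'I_n -> 'I_d * 'I_d}) : {ffun 'I_n -> 'I_d} := [ffun i => (z i).1].
Definition f2 (z : {ffun 'I_n -> 'I_d * 'I_d}) : {ffun 'I_n -> 'I_d} := [ffun i => (z i).2].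

Lemma sum_pair (F : {ffun 'I_n -> 'I_d} -> {ffun 'I_n -> 'I_d} -> C) :
  \sum_x \sum_y F x y = \sum_z F (f1 z) (f2 z).
Proof.
rewrite pair_bigA /=.
rewrite (reindex (fun z => (f1 z, f2 z))) //=.
exists (fun p : {ffun 'I_n -> 'I_d} * {ffun 'I_n -> 'I_d} => [ffun i => (p.1 i, p.2 i)]).
  by move=> z _; apply/ffunP => i; rewrite !ffunE /f1 /f2 ?ffunE; case: (z i).
by move=> [x y] _; rewrite /f1 /f2; congr (_, _); apply/ffunP => i; rewrite !ffunE.
Qed.

Definition gB (B : {set 'I_n}) (e : {ffun 'I_n -> 'I_(d ^ 2 - 1)})
  (z : {ffun 'I_n -> 'I_d * 'I_d}) : C :=
  phi B (f1 z) * (phi B (f2 z))^* * \prod_(j in B) lam (e j) (f2 z j) (f1 z j).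

Lemma tB_pair B e : tB lam B (phi B) e = \sum_z gB B e z.
Proof. by rewrite /tB sum_pair. Qed.

Lemma prod_part (F : 'I_n -> C) : \prod_(j < n) F j = \prod_(B in P) \prod_(j in B) F j.
Proof.
move: hP => /and3P[/eqP cov triv _].
rewrite -(@big_trivIset _ _ 1 *%R P F triv) cov; apply: eq_bigl => j; by rewrite in_setT.
Qed.

Lemma Tp_pair e : Tp e = \sum_z \prod_(B in P) gB B e z.
Proof.
rewrite /Tp /trprod /sigp /tensop.
rewrite (sum_pair (fun x y => psi x * (psi y)^* * \prod_j lam (e j) (y j) (x j))).
apply: eq_bigr => z _; rewrite /gB !big_split /= !hpsi rmorph_prod prod_part //.
Qed.

Lemma gB_dep B e : B \in P -> dep B (gB B e).
Proof.
move=> hB z z' h; rewrite /gB.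
have h1 : phi B (f1 z) = phi B (f1 z').
  by apply: (hphi hB) => i hi; rewrite /f1 !ffunE h.
have h2 : phi B (f2 z) = phi B (f2 z').
  by apply: (hphi hB) => i hi; rewrite /f2 !ffunE h.
rewrite h1 h2; congr (_ * _); apply: eq_bigr => j hj.
by rewrite /f1 /f2 !ffunE h.
Qed.

Lemma Tfact e : Tp e * (((d * d) ^ n)%N%:R : C) ^+ #|P| =
  ((d * d) ^ n)%N%:R * \prod_(B in P) tB lam B (phi B) e.
Proof.
move: (hP) => /and3P[_ triv _].
have -> : ((d * d) ^ n)%N = (#|{: 'I_d * 'I_d}| ^ n)%N by rewrite card_prod card_ord.
rewrite Tp_pair -(@prod_merge_set _ n _ P (fun B => gB B e) triv (fun B hB => @gB_dep B e hB)) mulrC.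
by congr (_ * _); apply: eq_bigr => B _; rewrite tB_pair.
Qed.


Lemma Tsq e : Tp e ^+ 2 * ((((d * d) ^ n)%N%:R : C) ^+ #|P|) ^+ 2 =
  (((d * d) ^ n)%N%:R) ^+ 2 *
  \prod_(B in P) ((tB lam B (phi B) e)^* * tB lam B (phi B) e).
Proof.
set K := (((d * d) ^ n)%N%:R : C).
have E : Tp e ^+ 2 * (K ^+ #|P|) ^+ 2 = (Tp e * K ^+ #|P|) * (Tp e * K ^+ #|P|)^*.
  rewrite rmorphM /= Tp_real rmorphXn /= conjC_nat.
  move: (Tp e) (K ^+ #|P|) => a b; ring.
rewrite E Tfact rmorphM /= conjC_nat rmorph_prod /= big_split /= -/K.
clear E; move: (\prod_(B in P) _) (\prod_(i in P) _) K => a b c; ring.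
Qed.

Lemma normP : (\prod_(B in P) Nphi (phi B)) * ((d ^ n)%N%:R) = ((d ^ n)%N%:R : C) ^+ #|P|.
Proof.
move: (hP) => /and3P[_ triv _].
have -> : (d ^ n)%N = (#|'I_d| ^ n)%N by rewrite card_ord.
rewrite /Nphi (@prod_merge_set _ n _ P (fun B x => phi B x * (phi B x)^*) triv).
  suff -> : \sum_x \prod_(B in P) (phi B x * (phi B x)^*) = 1 by rewrite mul1r.
  apply: (etrans _ hnorm); apply: eq_bigr => x _.
  by rewrite normCK hpsi rmorph_prod /= big_split.
move=> B hB x y h /=.
by rewrite (hphi hB h).
Qed.

Lemma ssP : (\prod_(B in P) ss lam B (phi B)) * (((d ^ 2 - 1) ^ n)%N%:R) =
  (\sum_e \prod_(B in P) ((tB lam B (phi B) e)^* * tB lam B (phi B) e)) *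
  ((((d ^ 2 - 1) ^ n)%N%:R : C) ^+ #|P|).
Proof.
move: (hP) => /and3P[_ triv _].
have -> : ((d ^ 2 - 1) ^ n)%N = (#|'I_(d ^ 2 - 1)| ^ n)%N by rewrite card_ord.
rewrite /ss (@prod_merge_set _ n _ P
   (fun B e => (tB lam B (phi B) e)^* * tB lam B (phi B) e) triv) //.
move=> B hB x y h /=.
by rewrite (L7 lam (phi B) h).
Qed.

Lemma prod_block :
  (\prod_(B in P) ss lam B (phi B)) * ((d * d)%:R * (d ^ 2 - 1)%:R) ^+ n <=
  ((d * d)%:R * (d ^ 2 - 1)%:R) ^+ (n * #|P|) *
  (\prod_(B in P) ((d%:R : C) ^+ #|B| - 1)) * (\prod_(B in P) Nphi (phi B)) ^+ 2.
Proof.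
move: (hP) => hP'; move: (hP) => /and3P[_ _ nz].
set Q := ((d * d)%:R * (d ^ 2 - 1)%:R : C).
have hQ : 0 <= Q by rewrite /Q -natrM ler0n.
have H := @ler_prod _ _ (index_enum _) (fun B => B \in P)
  (fun B => ss lam B (phi B) * Q ^+ #|B|)
  (fun B => Q ^+ n * ((d%:R : C) ^+ #|B| - 1) * Nphi (phi B) ^+ 2).
have hn : n = (\sum_(B in P) #|B|)%N.
  by rewrite -(card_partition hP') cardsT card_ord.
apply: le_trans (le_trans _ (H _)) _.
- rewrite big_split /= prodrXr -hn //.
- move=> B hB; apply/andP; split.
    apply: mulr_ge0; last exact: exprn_ge0.
    by apply: sumr_ge0 => e _; rewrite mulrC mul_conjC_ge0.
  have : B != set0 by apply/negP => /eqP e; move: nz; rewrite -e hB.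
  case/set0Pn => j0 j0B.
  by apply: (block_final herm trz orth j0B (hphi hB) hd).
- by rewrite !big_split /= prodr_const -exprM -expr2.
Qed.


Lemma pure_bound : \sum_e Tp e ^+ 2 <= ((\prod_(B in P) (d ^ #|B| - 1))%N)%:R.
Proof.
have ePf : ((\prod_(B in P) (d ^ #|B| - 1))%N)%:R =
           \prod_(B in P) ((d%:R : C) ^+ #|B| - 1).
  rewrite natr_prod; apply: eq_bigr => B _.
  rewrite natrB ?natrX //; rewrite expn_gt0; lia.
rewrite ePf.
set A := ((d ^ n)%N%:R : C).
set L := (((d ^ 2 - 1) ^ n)%N%:R : C).
have eK : (((d * d) ^ n)%N%:R : C) = A ^+ 2 by rewrite /A expnMn natrM expr2.
have eQ : ((d * d)%:R * (d ^ 2 - 1)%:R : C) ^+ n = A ^+ 2 * L.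
  have f1 : ((d * d)%:R : C) ^+ n = A ^+ 2 by rewrite -natrX eK.
  have f2 : ((d ^ 2 - 1)%:R : C) ^+ n = L by rewrite -natrX.
  by rewrite exprMn f1 f2.
have d2 : (0 < d ^ 2 - 1)%N.
  have : (4 <= d ^ 2)%N by rewrite (@leq_exp2r 2 d 2). lia.
apply: (@alg_final C _ (\sum_e \prod_(B in P) ((tB lam B (phi B) e)^* * tB lam B (phi B) e))
   (\prod_(B in P) ss lam B (phi B)) (\prod_(B in P) Nphi (phi B)) _ A (A ^+ #|P|) L
   (L ^+ #|P|) (((d * d)%:R * (d ^ 2 - 1)%:R) ^+ n)
   (((d * d)%:R * (d ^ 2 - 1)%:R) ^+ (n * #|P|))).
- by rewrite ltr0n expn_gt0; lia.
- by rewrite ltr0n expn_gt0 d2.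
- by rewrite exprn_gt0 // ltr0n expn_gt0 d2.
- by rewrite exprn_gt0 // -natrM ltr0n muln_gt0; apply/andP; split; [lia | ].
- by rewrite exprn_gt0 // ltr0n expn_gt0; lia.
- have e1 : (A ^+ #|P|) ^+ 2 = ((((d * d) ^ n)%N%:R : C)) ^+ #|P| by rewrite eK exprAC.
  have e2 : A ^+ 4 = ((((d * d) ^ n)%N%:R : C)) ^+ 2 by rewrite eK -exprM.
  rewrite e1 e2 mulr_suml.
  under eq_bigr do rewrite Tsq.
  by rewrite -mulr_sumr.
- exact: ssP.
- exact: normP.
- exact: prod_block.
- exact: eQ.
- by rewrite exprM eQ exprMn exprAC.
Qed.

End Pure.

Lemma jensen (C : numClosedFieldType) m (p T : 'I_m -> C) :
  (forall i, 0 <= p i) -> \sum_i p i = 1 -> (forall i, (T i)^* = T i) ->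
  (\sum_i p i * T i) ^+ 2 <= \sum_i p i * T i ^+ 2.
Proof.
move=> p0 p1 Tr.
set mu := \sum_i p i * T i.
have mur : mu^* = mu.
  rewrite /mu rmorph_sum; apply: eq_bigr => i _.
  by rewrite rmorphM /= Tr geC0_conj.
have H : 0 <= \sum_i p i * (T i - mu) ^+ 2.
  apply: sumr_ge0 => i _; apply: mulr_ge0 => //.
  have -> : (T i - mu) ^+ 2 = (T i - mu) * (T i - mu)^*.
    by rewrite rmorphB /= Tr mur expr2.
  exact: mul_conjC_ge0.
have E : \sum_i p i * (T i - mu) ^+ 2 = \sum_i p i * T i ^+ 2 - mu ^+ 2.
  transitivity (\sum_i (p i * T i ^+ 2 - (mu *+ 2) * (p i * T i) + mu ^+ 2 * p i)).
    by apply: eq_bigr => i _; ring.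
  rewrite big_split /= sumrB -!mulr_sumr p1 -/mu; ring.
by rewrite E subr_ge0 in H.
Qed.

Theorem mainTheorem6 (C : numClosedFieldType) (n d k : nat)
    (lam : 'I_(d ^ 2 - 1) -> 'M[C]_d) (rho : qop C n d) :
  (1 <= n)%N -> (2 <= d)%N -> (1 <= k)%N -> (k <= n)%N ->
  gellmann_basis lam ->
  k_separable k rho ->
  let R := (n - k * (n %/ k))%N in
  tau_norm lam rho <=
    sqrtC (((d ^ ceil_div n k - 1) ^ R * (d ^ (n %/ k) - 1) ^ (k - R))%N)%:R.
Proof.
move=> n1 d2 k1 kn [herm trz orth] [m [p [sigma [p0 p1 hs hrho]]]].
cbv zeta.
set M := ((d ^ ceil_div n k - 1) ^ (n - k * (n %/ k)) * (d ^ (n %/ k) - 1) ^ (k - (n - k * (n %/ k))))%N.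
pose Ti i (e : {ffun 'I_n -> 'I_(d ^ 2 - 1)}) := trprod (sigma i) (tensop (fun j => lam (e j))).
have pure i : (forall e, (Ti i e)^* = Ti i e) /\ \sum_e Ti i e ^+ 2 <= M%:R.
  case: (hs i) => psi [hn [P [hP hk [phi [hphi hpsi]]]] hsig].
  have eT e : Ti i e = Tp lam psi e.
    rewrite /Ti /Tp /trprod; apply: eq_bigr => x _; apply: eq_bigr => y _.
    by rewrite hsig.
  split; first by move=> e; rewrite eT Tp_real.
  under eq_bigr do rewrite eT.
  apply: le_trans (pure_bound herm trz orth d2 hP hphi hpsi hn) _.
  rewrite ler_nat; exact: comb_bound.
have eTr (e : {ffun 'I_n -> 'I_(d ^ 2 - 1)}) : trprod rho (tensop (fun j => lam (e j))) = \sum_i p i * Ti i e.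
  rewrite /trprod /Ti.
  under eq_bigr do under eq_bigr do rewrite hrho mulr_suml.
  under eq_bigr do rewrite exchange_big.
  rewrite exchange_big; apply: eq_bigr => i _.
  rewrite mulr_sumr; apply: eq_bigr => x _; rewrite mulr_sumr; apply: eq_bigr => y _.
  by rewrite mulrA.
rewrite /tau_norm.
under eq_bigr do rewrite eTr.
have S0 : 0 <= \sum_e (\sum_i p i * Ti i e) ^+ 2.
  apply: sumr_ge0 => e _.
  have -> : (\sum_i p i * Ti i e) ^+ 2 = (\sum_i p i * Ti i e) * (\sum_i p i * Ti i e)^*.
    rewrite rmorph_sum expr2; congr (_ * _); apply: eq_bigr => i _.
    by rewrite rmorphM /= geC0_conj // (proj1 (pure i)).
  exact: mul_conjC_ge0.
rewrite ler_sqrtC ?nnegrE ?ler0n //.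
apply: le_trans (_ : \sum_e \sum_i p i * Ti i e ^+ 2 <= _).
  apply: ler_sum => e _; apply: jensen => // i; exact: (proj1 (pure i)).
rewrite exchange_big /=.
apply: le_trans (_ : \sum_i p i * M%:R <= _).
  apply: ler_sum => i _; rewrite -mulr_sumr; apply: ler_wpM2l => //.
  exact: (proj2 (pure i)).
by rewrite -mulr_suml p1 mul1r.
Qed.
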